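(* Let $A\in\mathbb{R}^{n\times n}$ with spectral radius $\rho(A)<1$, let $C\in\mathbb{R}^{m\times n}$, and let $Q\in\mathbb{R}^{n\times n}$, $R\in\mathbb{R}^{m\times m}$ be symmetric positive definite, with $(A,C)$ observable and $(A,Q^{1/2})$ controllable. Let $\bar P$ be the unique stabilizing positive definite solution of the discrete-time algebraic Riccati equation $$\bar P = A\bar PA^{\intercal}+Q-(A\bar PA^{\intercal}+Q)C^{\intercal}\big(C(A\bar PA^{\intercal}+Q)C^{\intercal}+R\big)^{-1}C(A\bar PA^{\intercal}+Q),$$ let $P^{OP}=L(A,Q)$ and $P_n=P^{OP}+\bar P$. Let $\gamma^e\in(0,1)$ and $\mu\in(0,1)$. Let $(\lambda^e_k)_{k\ge1}$ be i.i.d. $\{0,1\}$-valued random variables with $\mathbb{P}[\lambda^e_k=0]=\gamma^e$, and let $(u_k)_{k\ge1}$ be i.i.d. $\{0,1\}$-valued random variables with $\mathbb{P}[u_k=0]=\mu$, the two sequences being independent of each other. Let $P^e_0$ be a fixed symmetric positive semidefinite matrix and define recursively, for $k\ge1$, $$P^e_k=\begin{cases}\bar P, & \text{if } (\lambda^e_k,u_k)=(1,1),\\ P_n, & \text{if } (\lambda^e_k,u_k)=(1,0),\\ AP^e_{k-1}A^{\intercal}+Q, & \text{if } \lambda^e_k=0.\end{cases}$$ Then $$\lim_{k\to\infty}\mathbb{E}[P^e_k]=(1-\gamma^e)(1-\mu)\,W^e+\gamma^e S^e+(1-\gamma^e)\mu\,H^e,$$ where $W^e=L(\sqrt{\gamma^e}A,\bar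 P)$, $S^e=L(\sqrt{\gamma^e}A,Q)$ and $H^e=L(\sqrt{\gamma^e}A,P_n)$.
   Context: For a square matrix $T$ with $\rho(T)<1$ and a symmetric matrix $U$, $L(T,U)$ denotes the unique solution $V$ of the discrete-time Lyapunov equation $V=TVT^{\intercal}+U$, equivalently $L(T,U)=\sum_{j=0}^{\infty}T^jU(T^{\intercal})^j$. $P^{OP}=L(A,Q)$ is the open-loop (prediction-only) error covariance of the system $x_{k+1}=Ax_k+w_k$, $\mathrm{Cov}(w_k)=Q$. Here $P^e_k$ models the error covariance of an eavesdropper that receives packets when $\lambda^e_k=1$; a received packet is either the sensor's Kalman estimate (error covariance $\bar P$, when $u_k=1$) or independent noise with covariance $\bar P$ that the eavesdropper mistakes for the estimate (error covariance $P_n$, when $u_k=0$). *)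

(* Defs.v *)
From HB Require Import structures.
From mathcomp Require Import all_boot all_order all_algebra.
From mathcomp Require Import all_classical all_reals all_analysis.
From mathcomp Require Import complex.
Set Implicit Arguments. Unset Strict Implicit. Unset Printing Implicit Defensive.
Import Order.TTheory GRing.Theory Num.Theory numFieldNormedType.Exports.
Local Open Scope classical_set_scope.
Local Open Scope ring_scope.

Section Defs.
Variable R : realType.

Definition symmetric n (M : 'M[R]_n) := M^T = M.
Definition posdef n (M : 'M[R]_n) :=
  symmetric M /\ forall x : 'cV[R]_n, x != 0 -> 0 < (x^T *m M *m x) ord0 ord0.
Definition psd n (M : 'M[R]_n) :=
  symmetric M /\ forall x : 'cV[R]_n, 0 <= (x^T *m M *m x) ord0 ord0.

Definition spectral_radius_lt1 n (A : 'M[R]_n) :=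
  forall z : R[i], eigenvalue (map_mx (real_complex R) A) z -> `|z| < 1.

Definition obsv_mx n m (A : 'M[R]_n) (C : 'M[R]_(m, n)) :=
  \mxcol_(i < n) (C *m A ^+ i).
Definition ctrb_mx n p (A : 'M[R]_n) (B : 'M[R]_(n, p)) :=
  \mxrow_(i < n) (A ^+ i *m B).
Definition observable n m (A : 'M[R]_n) (C : 'M[R]_(m, n)) :=
  \rank (obsv_mx A C) = n.
Definition controllable n p (A : 'M[R]_n) (B : 'M[R]_(n, p)) :=
  \rank (ctrb_mx A B) = n.

Definition lyap n (T U : 'M[R]_n) : 'M[R]_n :=
  \matrix_(i, j) limn (series (fun k => (T ^+ k *m U *m (T^T) ^+ k) i j)).

Definition pred_cov n (A Q P : 'M[R]_n) := A *m P *m A^T + Q.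
Definition kgain n m (A Q : 'M[R]_n) (C : 'M[R]_(m, n)) (Rn : 'M[R]_m)
  (P : 'M[R]_n) : 'M[R]_(n, m) :=
  let M := pred_cov A Q P in M *m C^T *m invmx (C *m M *m C^T + Rn).

Definition dare n m (A Q : 'M[R]_n) (C : 'M[R]_(m, n)) (Rn : 'M[R]_m)
  (P : 'M[R]_n) :=
  let M := pred_cov A Q P in
  P = M - M *m C^T *m invmx (C *m M *m C^T + Rn) *m C *m M.

Definition stabilizing n m (A Q : 'M[R]_n) (C : 'M[R]_(m, n)) (Rn : 'M[R]_m)
  (P : 'M[R]_n) :=
  spectral_radius_lt1 ((1%:M - kgain A Q C Rn P *m C) *m A).

(* eavesdropper error covariance recursion; lam k, u k are lambda^e_(k+1),
   u_(k+1) *)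
Fixpoint Pe n (T : Type) (A Q Pbar Pn P0 : 'M[R]_n) (lam u : nat -> T -> bool)
  (k : nat) (w : T) : 'M[R]_n :=
  match k with
  | 0 => P0
  | k'.+1 => if lam k' w then (if u k' w then Pbar else Pn)
             else A *m Pe A Q Pbar Pn P0 lam u k' w *m A^T + Q
  end.

Definition mutually_independent d (T : measurableType d) (P : probability T R)
  (I : eqType) (X : I -> T -> bool) :=
  forall (J : seq I) (B : I -> set bool), uniq J ->
    P (\big[setI/setT]_(j <- J) (X j @^-1` B j))
    = \big[*%E/1%E]_(j <- J) P (X j @^-1` B j).

End Defs.

(* Main.v *)
Require Import Defs.
From HB Require Import structures.
From mathcomp Require Import all_boot all_order all_algebra.
From mathcomp Require Import all_classical all_reals all_analysis.
From mathcomp Require Import complex.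
From mathcomp Require Import ring lra.
Import Order.TTheory GRing.Theory Num.Theory numFieldNormedType.Exports.
Set Implicit Arguments. Unset Strict Implicit. Unset Printing Implicit Defensive.
Local Open Scope classical_set_scope.
Local Open Scope ring_scope.
Local Open Scope complex_scope.
Section Bnd.
Variable C : numDomainType.

Definition mnrm n m (U : 'M[C]_(n, m)) := \sum_i \sum_j `|U i j|.

Lemma mnrm_ge0 n m (U : 'M[C]_(n, m)) : 0 <= mnrm U.
Proof. by apply: sumr_ge0 => i _; apply: sumr_ge0 => j _. Qed.

Lemma entry_le_mnrm n m (U : 'M[C]_(n, m)) i j : `|U i j| <= mnrm U.
Proof.
rewrite /mnrm (bigD1 i) //= (bigD1 j) //= -addrA lerDl.
apply: addr_ge0; first by apply: sumr_ge0.
by apply: sumr_ge0 => k _; apply: sumr_ge0.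
Qed.

Lemma bnd_mull n m p (U : 'M[C]_(n, m)) (X : 'M[C]_(m, p)) G :
  0 <= G -> (forall i j, `|X i j| <= G) ->
  forall i j, `|(U *m X) i j| <= mnrm U * G.
Proof.
move=> G0 HX i j; rewrite mxE.
apply: (le_trans (ler_norm_sum _ _ _)).
apply: (@le_trans _ _ (\sum_k `|U i k| * G)).
  by apply: ler_sum => k _; rewrite normrM ler_wpM2l.
rewrite -mulr_suml ler_wpM2r //.
rewrite /mnrm (bigD1 i) //= lerDl.
by apply: sumr_ge0 => k _; apply: sumr_ge0.
Qed.

Lemma bnd_mulr n m p (X : 'M[C]_(n, m)) (V : 'M[C]_(m, p)) G :
  0 <= G -> (forall i j, `|X i j| <= G) ->
  forall i j, `|(X *m V) i j| <= G * mnrm V.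
Proof.
move=> G0 HX i j; rewrite mxE.
apply: (le_trans (ler_norm_sum _ _ _)).
apply: (@le_trans _ _ (\sum_k G * `|V k j|)).
  by apply: ler_sum => k _; rewrite normrM ler_wpM2r.
rewrite -mulr_sumr ler_wpM2l //.
rewrite /mnrm exchange_big (bigD1 j) //= lerDl.
by apply: sumr_ge0 => k _; apply: sumr_ge0.
Qed.

End Bnd.
Section Trig.
Variable R : rcfType.
Local Notation C := R[i].

Lemma Cnorm_real (z : C) : (complex.Re (R:=R) `|z|)%:C = `|z|.
Proof. by rewrite RRe_real // normr_real. Qed.

Lemma Creal_ge0 (z : C) : 0 <= z -> (complex.Re (R:=R) z)%:C = z.
Proof. by move=> z0; rewrite RRe_real // ger0_real. Qed.

Lemma Cnorm_of (x : R) : `|x%:C| = `|x|%:C :> C.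
Proof.
rewrite normc_def /=; congr (_%:C).
by rewrite expr0n /= addr0 sqrtr_sqr.
Qed.

Variable n : nat.
Variable T : 'M[C]_n.
Hypothesis Ttrig : is_trig_mx T.
Hypothesis Tdiag : forall i, `|T i i| < 1.

Let rr i := complex.Re (R:=R) `|T i i|.
Let sg i := complex.Re (R:=R) (\sum_j `|T i j|).
Let ei i := (1 - rr i) / (1 + sg i).
Let e := \prod_i ei i.

Let rrE i : (rr i)%:C = `|T i i|. Proof. exact: Cnorm_real. Qed.
Let sgE i : (sg i)%:C = \sum_j `|T i j|.
Proof. by apply: Creal_ge0; apply: sumr_ge0. Qed.
Let rr_ge0 i : 0 <= rr i. Proof. rewrite -lecR rrE; exact: normr_ge0. Qed.
Let rr_lt1 i : rr i < 1. Proof. rewrite -ltcR rrE; exact: Tdiag. Qed.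
Let sg_ge0 i : 0 <= sg i. Proof. rewrite -lecR sgE; exact: sumr_ge0. Qed.
Let ei_gt0 i : 0 < ei i.
Proof. rewrite /ei divr_gt0 //; first by rewrite subr_gt0. by rewrite ltr_wpDr. Qed.
Let ei_le1 i : ei i <= 1.
Proof.
rewrite /ei ler_pdivrMr ?mul1r; last by rewrite ltr_wpDr.
have := rr_ge0 i; have := sg_ge0 i; lra.
Qed.
Let e_gt0 : 0 < e. Proof. by apply: prodr_gt0 => i _. Qed.
Let e_le1 : e <= 1. Proof. by apply: prodr_ile1 => i _; rewrite ltW ?ei_le1. Qed.
Let e_le_ei i : e <= ei i.
Proof.
rewrite /e (bigD1 i) //= ger_pMr //.
by apply: prodr_ile1 => j _; rewrite ltW ?ei_le1.
Qed.
Let e_sg i : e * sg i <= 1 - rr i.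
Proof.
apply: (le_trans (ler_wpM2r (sg_ge0 i) (e_le_ei i))).
rewrite /ei mulrAC ler_pdivrMr; last by rewrite ltr_wpDr.
have := rr_ge0 i; have := sg_ge0 i; have := rr_lt1 i; nra.
Qed.

Let E : C := e%:C.
Let E_neq0 : E != 0. Proof. by rewrite /E eq_complex /= negb_and gt_eqF. Qed.

Let S := \matrix_(i, j) (T i j * E ^+ i / E ^+ j).

Let Spow k i j : (S ^+ k) i j = (T ^+ k) i j * E ^+ i / E ^+ j.
Proof.
elim: k i j => [|k IH] i j.
  rewrite !expr0 !mxE; case: eqP => [->|_]; last by rewrite !mul0r.
  by rewrite mulfK // expf_neq0.
rewrite !exprSr -!mulmxE !mxE !big_distrl /=; apply: eq_bigr => l _.
rewrite IH mxE; field.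
by rewrite !expf_neq0.
Qed.


Let E_ge0 : 0 <= E. Proof. by rewrite /E lecR ltW. Qed.
Let E_le1 : E <= 1. Proof. by rewrite /E lecR. Qed.

Let Soff i j : j != i -> `|S i j| <= E * `|T i j|.
Proof.
move=> ji; rewrite mxE; case: (ltngtP i j) => [ij|ji'|/val_inj e']; last by rewrite e' eqxx in ji.
  by rewrite (is_trig_mxP Ttrig i j ij) !mul0r normr0 mulr0.
rewrite -mulrA -expfB // normrM mulrC ler_wpM2r // normrX ger0_norm //.
have -> : (i - j = (i - j).-1.+1)%N by rewrite prednK // subn_gt0.
by rewrite exprS ler_piMr // exprn_ile1.
Qed.

Let Srow i : \sum_j `|S i j| <= 1.
Proof.
rewrite (bigD1 i) //= mxE mulfK ?expf_neq0 //.
apply: (@le_trans _ _ (`|T i i| + \sum_(j | j != i) E * `|T i j|)).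
  by rewrite lerD2l; apply: ler_sum => j ji; apply: Soff.
apply: (@le_trans _ _ (`|T i i| + E * \sum_j `|T i j|)).
  rewrite lerD2l mulr_sumr [X in _ <= X](bigD1 i) //= lerDr.
  by rewrite mulr_ge0.
rewrite -rrE -sgE /E -rmorphM -rmorphD.
change (((rr i + e * sg i)%:C <= (1:R)%:C)%R).
by rewrite lecR; have := e_sg i; lra.
Qed.

Let Spow_row k i : \sum_j `|(S ^+ k) i j| <= 1.
Proof.
elim: k i => [|k IH] i.
  rewrite expr0; under eq_bigr do rewrite mxE.
  rewrite (bigD1 i) //= eqxx normr1 big1 ?addr0 // => j ji.
  by rewrite eq_sym (negbTE ji) normr0.
rewrite exprS -mulmxE.
apply: (@le_trans _ _ (\sum_j \sum_l `|S i l| * `|(S ^+ k) l j|)).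
  apply: ler_sum => j _; rewrite mxE.
  apply: (le_trans (ler_norm_sum _ _ _)).
  by apply: ler_sum => l _; rewrite normrM.
rewrite exchange_big /=.
apply: (@le_trans _ _ (\sum_l `|S i l|)); last exact: Srow.
apply: ler_sum => l _; rewrite -mulr_sumr.
by rewrite ler_piMr.
Qed.

Lemma trig_pow_bnd : exists G, 0 <= G /\ forall k i j, `|(T ^+ k) i j| <= G.
Proof.
exists (\sum_(i < n) \sum_(j < n) `|E ^+ j / E ^+ i|); split.
  by apply: sumr_ge0 => i _; apply: sumr_ge0.
move=> k i j.
have -> : (T ^+ k) i j = (S ^+ k) i j * (E ^+ j / E ^+ i).
  by rewrite Spow; field; rewrite !expf_neq0.
apply: (@le_trans _ _ (`|E ^+ j / E ^+ i|)).
  rewrite normrM ger_pMl ?normr_gt0 ?mulf_neq0 ?invr_neq0 ?expf_neq0 //.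
  apply: le_trans (Spow_row k i); rewrite (bigD1 j) //= lerDl.
  by apply: sumr_ge0.
rewrite (bigD1 i) //= (bigD1 j) //= -addrA lerDl.
apply: addr_ge0; first by apply: sumr_ge0.
by apply: sumr_ge0 => l _; apply: sumr_ge0.
Qed.

End Trig.

Lemma map_mxX (R : realType) n (A : 'M[R]_n) k :
  map_mx (real_complex R) (A ^+ k) = (map_mx (real_complex R) A) ^+ k.
Proof.
elim: k => [|k IH]; first by rewrite !expr0 -!idmxE map_mx1.
by rewrite !exprS -!mulmxE map_mxM IH.
Qed.

Lemma pow_bnd (R : realType) n (A : 'M[R]_n) : spectral_radius_lt1 A ->
  exists K, 0 <= K /\ forall k i j, `|(A ^+ k) i j| <= K.
Proof.
move=> hA.
case: (posnP n) => [n0|n_gt0].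
  by exists 0; split => // k [m Hm]; exfalso; move: Hm; rewrite n0.
set Ac := map_mx (real_complex R) A.
have [P Pu Ptrig] := Schur Ac n_gt0.
rewrite /similar_to conjymx // in Ptrig.
set Pa := (P ^t*)%sesqui in Ptrig.
have PPa : P *m Pa = 1%:M by apply/unitarymxP.
have PaP : Pa *m P = 1%:M.
  by rewrite /Pa -invmx_unitary // mulVmx // unitarymx_unit.
set T := P *m Ac *m Pa in Ptrig.
have Tdiag : forall i, `|T i i| < 1.
  move=> i; apply: hA.
  have : eigenvalue T (T i i).
    rewrite eigenvalue_root_char char_poly_trig // /root horner_prod.
    by rewrite (bigD1 i) //= hornerXsubC subrr mul0r.
  move=> /eigenvalueP [v vT v0]; apply/eigenvalueP; exists (v *m P).
    have -> : v *m P *m Ac = v *m T *m P.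
      by rewrite /T !mulmxA -(mulmxA _ Pa P) PaP mulmx1.
    by rewrite vT -scalemxAl.
  apply: contra v0 => /eqP vP0; apply/eqP.
  by rewrite -[v]mulmx1 -PPa mulmxA vP0 mul0mx.
have [G [G0 HG]] := trig_pow_bnd Ptrig Tdiag.
have TkE k : T ^+ k = P *m Ac ^+ k *m Pa.
  elim: k => [|k IH]; first by rewrite !expr0 -!idmxE mulmx1 PPa.
  rewrite exprSr IH. rewrite -!mulmxE /T !mulmxA -(mulmxA _ Pa P) PaP mulmx1.
  by rewrite [Ac ^+ k.+1]exprSr -mulmxE !mulmxA.
have AckE k : Ac ^+ k = Pa *m T ^+ k *m P.
  by rewrite TkE !mulmxA PaP mul1mx -mulmxA PaP mulmx1.
set Kc := mnrm Pa * G * mnrm P.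
have Kc0 : 0 <= Kc by rewrite /Kc !mulr_ge0 // mnrm_ge0.
exists (complex.Re Kc); split.
  by rewrite -lecR Creal_ge0.
move=> k i j; rewrite -lecR Creal_ge0 // -Cnorm_of.
have -> : ((A ^+ k) i j)%:C = (Ac ^+ k) i j by rewrite /Ac -map_mxX mxE.
rewrite AckE; apply: bnd_mulr; first by rewrite mulr_ge0 // mnrm_ge0.
by apply: bnd_mull.
Qed.

Local Close Scope complex_scope.


Section Bnd2.
Variable R : numDomainType.
Lemma bnd_mul n m p (X : 'M[R]_(n, m)) (Y : 'M[R]_(m, p)) G1 G2 :
  0 <= G1 -> (forall i j, `|X i j| <= G1) -> (forall i j, `|Y i j| <= G2) ->
  forall i j, `|(X *m Y) i j| <= m%:R * (G1 * G2).
Proof.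
move=> G10 HX HY i j; rewrite mxE.
apply: (le_trans (ler_norm_sum _ _ _)).
apply: (@le_trans _ _ (\sum_(k < m) G1 * G2)); last by rewrite sumr_const card_ord mulr_natl.
apply: ler_sum => k _; rewrite normrM.
by apply: ler_pM => //; apply: (le_trans _ (HX i k)).
Qed.
End Bnd2.

Lemma trmxX (R : comPzRingType) n (A : 'M[R]_n) k : (A ^+ k)^T = (A^T) ^+ k.
Proof.
elim: k => [|k IH]; first by rewrite !expr0 -!idmxE trmx1.
by rewrite exprSr exprS -!mulmxE trmx_mul IH.
Qed.

Lemma trmxZ' (R : pzRingType) m n (a : R) (A : 'M[R]_(m, n)) : (a *: A)^T = a *: A^T.
Proof. by apply/matrixP => i j; rewrite !mxE. Qed.

Lemma exprZmx (R : comPzRingType) n (a : R) (A : 'M[R]_n) k : (a *: A) ^+ k = a ^+ k *: A ^+ k.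
Proof.
elim: k => [|k IH]; first by rewrite !expr0 scale1r.
rewrite !exprS -!mulmxE IH -scalemxAl -scalemxAr; apply/matrixP => i j; by rewrite !mxE mulrA.
Qed.

Lemma scalemxA' (R : pzRingType) m n (a b : R) (X : 'M[R]_(m, n)) : a *: (b *: X) = (a * b) *: X.
Proof. by apply/matrixP => i j; rewrite !mxE mulrA. Qed.

Section Conv.
Variable R : realType.
Variable n : nat.
Variable A : 'M[R]_n.
Variable g : R.
Hypothesis g0 : 0 < g.
Hypothesis g1 : g < 1.
Variable K : R.
Hypothesis K0 : 0 <= K.
Hypothesis hK : forall k i j, `|(A ^+ k) i j| <= K.

Definition tm (U : 'M[R]_n) l := g ^+ l *: (A ^+ l *m U *m (A^T) ^+ l).

Lemma lyap_tm U l : (Num.sqrt g *: A) ^+ l *m U *m ((Num.sqrt g *: A)^T) ^+ l = tm U l.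
Proof.
rewrite trmxZ' !exprZmx -!scalemxAl -?scalemxAr !scalemxA' /tm; congr (_ *: _).
rewrite -exprMn -expr2 sqr_sqrtr //.
exact: ltW.
Qed.

Lemma tm_bnd U : exists B, forall l i j, `|tm U l i j| <= B * g ^+ l.
Proof.
pose MU := mnrm U.
exists (n%:R * ((K * MU) * K)) => l i j.
rewrite mxE normrM ger0_norm ?exprn_ge0 ?(ltW g0) // mulrC ler_wpM2r ?exprn_ge0 ?(ltW g0) //.
apply: bnd_mul.
- by rewrite mulr_ge0 // mnrm_ge0.
- by apply: bnd_mulr => //; exact: mnrm_ge0.
- by move=> a b; rewrite -trmxX mxE.
Qed.

Lemma series_geo_cvg (u : R ^nat) B : (forall l, `|u l| <= B * g ^+ l) -> cvgn (series u).
Proof.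
move=> hu; apply: (normed_cvg (V:=R^o)).
apply: (@series_le_cvg _ _ (geometric B g)).
- by move=> l /=; exact: normr_ge0.
- by move=> l /=; apply: le_trans (hu l).
- by move=> l /=; apply: hu.
- by apply: is_cvg_geometric_series; rewrite ger0_norm ?(ltW g0).
Qed.

Lemma tm_cvg U i j : cvgn (series (fun l => tm U l i j)).
Proof. by have [B hB] := tm_bnd U; apply: (series_geo_cvg (B:=B)). Qed.

Lemma lyapE U i j : lyap (Num.sqrt g *: A) U i j = limn (series (fun l => tm U l i j)).
Proof.
rewrite /lyap mxE; congr (limn (series _)); apply: funext => l.
by rewrite lyap_tm.
Qed.


Lemma tmS U k : tm U k.+1 = g *: (A *m tm U k *m A^T).
Proof.
rewrite /tm -scalemxAr -scalemxAl scalemxA' -exprS; congr (_ *: _).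
by rewrite exprS exprSr -!mulmxE !mulmxA.
Qed.

Lemma tm0 U : tm U 0 = U.
Proof. by rewrite /tm !expr0 scale1r -idmxE mul1mx mulmx1. Qed.

Fixpoint Fm (c P0 : 'M[R]_n) k :=
  if k is k'.+1 then c + g *: (A *m Fm c P0 k' *m A^T) else P0.

Lemma Fm_closed c P0 k : Fm c P0 k = tm P0 k + \sum_(l < k) tm c l.
Proof.
elim: k => [|k IH]; first by rewrite big_ord0 addr0 tm0.
rewrite /= IH big_ord_recl tm0 tmS.
rewrite mulmxDr mulmxDl scalerDr addrCA; congr (_ + (_ + _)).
rewrite mulmx_sumr mulmx_suml scaler_sumr; apply: eq_bigr => l _.
by rewrite tmS.
Qed.

Lemma Fm_cvg c P0 i j :
  (fun k => Fm c P0 k i j) @ \oo --> limn (series (fun l => tm c l i j)).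
Proof.
have -> : (fun k => Fm c P0 k i j) =
   (fun k => tm P0 k i j) + series (fun l => tm c l i j).
  apply: funext => k; rewrite Fm_closed mxE /= seriesEord /= summxE //.
rewrite -[X in _ --> X]add0r; apply: cvgD; last exact: tm_cvg.
have [B hB] := tm_bnd P0.
apply: (@squeeze_cvgr _ _ _ _ (geometric (- B) g) (geometric B g)).
- apply: nearW => k /=; have := hB k i j; rewrite ler_norml mulNr.
  by case/andP => -> ->.
- by apply: cvg_geometric; rewrite ger0_norm ?(ltW g0).
- by apply: cvg_geometric; rewrite ger0_norm ?(ltW g0).
Qed.

End Conv.
Section Prob.
Variables (R : realType) (d : measure_display) (T : measurableType d) (P : probability T R).

Definition good (f : T -> R) :=
  measurable_fun setT f /\ exists2 M, 0 <= M & forall w, `|f w| <= M.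

Lemma good_Lfun f : good f -> f \in Lfun P 1.
Proof.
move=> [mf [M M0 hM]]; apply/Lfun1_integrable.
apply: measurable_bounded_integrable => //.
- by apply: (le_lt_trans (probability_le1 P measurableT)); rewrite ltry.
- exists M; split; first exact: num_real.
  by move=> M' hM' w _; exact: le_trans (hM w) (ltW hM').
Qed.

Lemma good_cst c : good (fun _ => c).
Proof. by split; [exact: measurable_cst | exists `|c|]. Qed.

Lemma good_add f g : good f -> good g -> good (fun w => f w + g w).
Proof.
move=> [mf [M1 M10 h1]] [mg [M2 M20 h2]]; split; first exact: measurable_realfun.measurable_funD.
exists (M1 + M2); first exact: addr_ge0.
by move=> w; apply: le_trans (ler_normD _ _) _; apply: lerD.
Qed.

Lemma good_mul f g : good f -> good g -> good (fun w => f w * g w).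
Proof.
move=> [mf [M1 M10 h1]] [mg [M2 M20 h2]]; split; first exact: measurable_realfun.measurable_funM.
exists (M1 * M2); first exact: mulr_ge0.
by move=> w; rewrite normrM; apply: ler_pM.
Qed.

Lemma good_sum m (F : 'I_m -> T -> R) : (forall i, good (F i)) ->
  good (fun w => \sum_(i < m) F i w).
Proof.
elim: m F => [|m IH] F hF.
  have -> : (fun w => \sum_(i < 0) F i w) = (fun _ => 0).
    by apply: funext => w; rewrite big_ord0.
  exact: good_cst.
have -> : (fun w => \sum_(i < m.+1) F i w) =
  (fun w => \sum_(i < m) F (widen_ord (leqnSn m) i) w + F ord_max w).
  by apply: funext => w; rewrite big_ord_recr.
exact: good_add (IH (fun i => F (widen_ord (leqnSn m) i)) (fun i => hF _)) (hF ord_max).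
Qed.

Lemma good_indic S : measurable S -> good (\1_S).
Proof.
move=> mS; split; first exact: measurable_realfun.measurable_indic.
by exists 1 => // w; rewrite /indic; case: (w \in S); rewrite ?normr1 ?normr0.
Qed.

Local Open Scope ereal_scope.

Lemma E_add f g : good f -> good g ->
  'E_P[fun w => (f w + g w)%R] = 'E_P[f] + 'E_P[g].
Proof. by move=> hf hg; apply: expectationD; apply: good_Lfun. Qed.

Lemma E_scale k f : good f -> 'E_P[fun w => (k * f w)%R] = k%:E * 'E_P[f].
Proof.
move=> hf; have -> : (fun w => (k * f w)%R) = (k \o* f)%R by apply: funext => w; rewrite /= mulrC.
by apply: expectationZl; apply: good_Lfun.
Qed.

Lemma E_sum m (F : 'I_m -> T -> R) : (forall i, good (F i)) ->
  'E_P[fun w => (\sum_(i < m) F i w)%R] = \sum_(i < m) 'E_P[F i].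
Proof.
elim: m F => [|m IH] F hF.
  rewrite big_ord0; have -> : (fun w => (\sum_(i < 0) F i w)%R) = cst 0%R.
    by apply: funext => w; rewrite big_ord0.
  by rewrite expectation_cst.
rewrite big_ord_recr /=.
have -> : (fun w => (\sum_(i < m.+1) F i w)%R) =
  (fun w => (\sum_(i < m) F (widen_ord (leqnSn m) i) w + F ord_max w)%R).
  by apply: funext => w; rewrite big_ord_recr.
rewrite E_add; first by rewrite IH.
- by apply: good_sum.
- exact: hF.
Qed.


Local Close Scope ereal_scope.

Lemma bool_meas (B : set bool) : measurable B.
Proof. by []. Qed.

Variables (lam u : nat -> T -> bool).
Hypothesis mlam : forall k, measurable_fun setT (lam k).
Hypothesis mu_ : forall k, measurable_fun setT (u k).

Definition X := fun i : nat + nat => match i with inl k => lam k | inr k => u k end.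
Definition idx (i : nat + nat) := match i with inl k => k | inr k => k end.

Hypothesis hind : mutually_independent P X.

Lemma mX i : measurable_fun setT (X i).
Proof. by case: i => k /=. Qed.

Lemma pre_meas i B : measurable (X i @^-1` B).
Proof. by have := @mX i measurableT B (bool_meas B); rewrite setTI. Qed.

Definition SJ (J : seq (nat + nat)) (B : nat + nat -> set bool) :=
  \big[setI/setT]_(j <- J) (X j @^-1` B j).

Lemma SJ_meas J B : measurable (SJ J B).
Proof. by apply: bigsetI_measurable => j _; apply: pre_meas. Qed.

Definition upd (B : nat + nat -> set bool) i s := fun j => if j == i then s else B j.

Lemma SJ_upd J B i s : i \notin J -> SJ J (upd B i s) = SJ J B.
Proof.
elim: J => [|j J IH]; first by rewrite /SJ !big_nil.
rewrite in_cons negb_or => /andP[ij iJ].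
by rewrite /SJ !big_cons -/(SJ J _) -/(SJ J B) IH // /upd eq_sym (negbTE ij).
Qed.

Lemma SJ_cons_indic i J B s w : i \notin J ->
  \1_(SJ (i :: J) (upd B i s)) w = (\1_(X i @^-1` s) w * \1_(SJ J B) w)%R :> R.
Proof.
move=> iJ; rewrite /SJ big_cons -/(SJ J _) SJ_upd // {1}/upd eqxx.
by rewrite indicI.
Qed.

Lemma P_cons i J B s : uniq (i :: J) ->
  P (SJ (i :: J) (upd B i s)) = (P (X i @^-1` s) * P (SJ J B))%E.
Proof.
move=> uJ; rewrite /SJ hind // big_cons {1}/upd eqxx; congr (_ * _)%E.
move: uJ => /= /andP[iJ uJ].
rewrite -hind //; move: (SJ_upd B s iJ); rewrite /SJ => E1. by rewrite E1.
Qed.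

Lemma indic_pre (f : T -> bool) b w : \1_(f @^-1` [set b]) w = (f w == b)%:R :> R.
Proof.
rewrite /indic; have [h|h] := eqVneq (f w) b.
  by rewrite mem_set.
by rewrite memNset // => /eqP; rewrite (negbTE h).
Qed.


Variable n : nat.
Variables (A Q Pbar Pn P0 : 'M[R]_n).

Let Pk k w := Pe A Q Pbar Pn P0 lam u k w.

Lemma ABAt (n' : nat) (A' M : 'M[R]_n') a b :
  (A' *m M *m A'^T) a b = \sum_(c < n') \sum_(e < n') A' a c * A' b e * M c e.
Proof.
rewrite mxE; under eq_bigr => j _ do rewrite !mxE big_distrl.
rewrite exchange_big; apply: eq_bigr => c _; apply: eq_bigr => e _.
by rewrite /=; ring.
Qed.

Lemma Pe_step k w a b : Pk k.+1 w a b =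
  \1_(lam k @^-1` [set true]) w * (\1_(u k @^-1` [set true]) w * Pbar a b)
  + \1_(lam k @^-1` [set true]) w * (\1_(u k @^-1` [set false]) w * Pn a b)
  + \1_(lam k @^-1` [set false]) w *
      (Q a b + \sum_(c < n) \sum_(e < n) A a c * A b e * Pk k w c e).
Proof.
rewrite !indic_pre /Pk /=.
by case: (lam k w); case: (u k w) => /=; rewrite ?mul1r ?mul0r ?addr0 ?add0r // mxE ABAt addrC.
Qed.

Lemma good_pre (f : T -> bool) (b : bool) : measurable_fun setT f ->
  good (\1_(f @^-1` [set b]) : T -> R).
Proof.
move=> mf; apply: good_indic.
by have := mf measurableT [set b] (bool_meas _); rewrite setTI.
Qed.

Lemma good_Pe k a b : good (fun w => Pk k w a b).
Proof.
elim: k a b => [|k IH] a b; first exact: good_cst.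
have -> : (fun w => Pk k.+1 w a b) = (fun w =>
  \1_(lam k @^-1` [set true]) w * (\1_(u k @^-1` [set true]) w * Pbar a b)
  + \1_(lam k @^-1` [set true]) w * (\1_(u k @^-1` [set false]) w * Pn a b)
  + \1_(lam k @^-1` [set false]) w *
      (Q a b + \sum_(c < n) \sum_(e < n) A a c * A b e * Pk k w c e)).
  by apply: funext => w; rewrite Pe_step.
repeat apply: good_add; repeat apply: good_mul;
  try apply: good_pre; try apply: good_cst; auto.
apply: good_add; first exact: good_cst.
apply: good_sum => c; apply: good_sum => e; apply: good_mul; first exact: good_cst.
exact: IH.
Qed.


Variables (g mu : R).
Hypothesis hlam : forall k, P (lam k @^-1` [set false]) = g%:E.
Hypothesis hu : forall k, P (u k @^-1` [set false]) = mu%:E.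

Let c := (1 - g) * (1 - mu) *: Pbar + (1 - g) * mu *: Pn + g *: Q.
Let F := Fm A g c P0.

Lemma F_step k a b : F k.+1 a b =
  (1 - g) * (1 - mu) * Pbar a b + (1 - g) * mu * Pn a b + g * Q a b
  + g * \sum_(c < n) \sum_(e < n) A a c * A b e * F k c e.
Proof.
rewrite /F /= mxE; congr (_ + _); first by rewrite /c !mxE.
by rewrite mxE ABAt.

Qed.

Lemma P_true_l k : P (lam k @^-1` [set true]) = (1 - g)%:E.
Proof.
have -> : lam k @^-1` [set true] = ~` (lam k @^-1` [set false]).
  by apply/seteqP; split => w /=; case: (lam k w).
by rewrite probability_setC ?hlam // ; exact: (pre_meas (inl k)).
Qed.

Lemma P_true_u k : P (u k @^-1` [set true]) = (1 - mu)%:E.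
Proof.
have -> : u k @^-1` [set true] = ~` (u k @^-1` [set false]).
  by apply/seteqP; split => w /=; case: (u k w).
by rewrite probability_setC ?hu // ; exact: (pre_meas (inr k)).
Qed.

Lemma E_indic' S : measurable S -> ('E_P[fun w => \1_S w] = P S)%E.
Proof. exact: expectation_indic. Qed.

Lemma PfinE S : measurable S -> P S = (fine (P S))%:E.
Proof.
move=> mS; rewrite fineK // ge0_fin_numE //.
exact: le_lt_trans (probability_le1 P mS) (ltry 1).
Qed.


Ltac gtac := repeat first [ apply: good_add | apply: good_mul | apply: good_cst
  | apply: good_indic; apply: SJ_meas | apply: good_Pe
  | apply: good_sum => ? | apply: good_pre ].

Lemma claim k : forall J B, uniq J -> (forall j, j \in J -> (k <= idx j)%N) ->
  forall a b, ('E_P[fun w => (Pk k w a b * \1_(SJ J B) w)%R] = (F k a b)%:E * P (SJ J B))%E.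
Proof.
elim: k => [|k IH] J B uJ hJ a b.
  rewrite E_scale; last by apply: good_indic; apply: SJ_meas.
  by rewrite E_indic' //; apply: SJ_meas.
have nl : inl k \notin J by apply/negP => /hJ /=; rewrite ltnn.
have nr : inr k \notin J by apply/negP => /hJ /=; rewrite ltnn.
have nlr : inl k \notin inr k :: J by rewrite in_cons negb_or nl.
set S := SJ J B.
set S11 := SJ (inl k :: inr k :: J) (upd (upd B (inr k) [set true]) (inl k) [set true]).
set S10 := SJ (inl k :: inr k :: J) (upd (upd B (inr k) [set false]) (inl k) [set true]).
set S0 := SJ (inl k :: J) (upd B (inl k) [set false]).
have I11 w : \1_S11 w = \1_(lam k @^-1` [set true]) w * (\1_(u k @^-1` [set true]) w * \1_S w) :> R.
  by rewrite /S11 SJ_cons_indic // SJ_cons_indic.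
have I10 w : \1_S10 w = \1_(lam k @^-1` [set true]) w * (\1_(u k @^-1` [set false]) w * \1_S w) :> R.
  by rewrite /S10 SJ_cons_indic // SJ_cons_indic.
have I0 w : \1_S0 w = \1_(lam k @^-1` [set false]) w * \1_S w :> R.
  by rewrite /S0 SJ_cons_indic.
have -> : (fun w => Pk k.+1 w a b * \1_S w) = (fun w =>
   Pbar a b * \1_S11 w + Pn a b * \1_S10 w + Q a b * \1_S0 w
   + \sum_(c < n) \sum_(e < n) (A a c * A b e) * (Pk k w c e * \1_S0 w)).
  apply: funext => w; rewrite Pe_step I11 I10 I0.
  have -> : \sum_(c < n) \sum_(e < n) (A a c * A b e) * (Pk k w c e *
     (\1_(lam k @^-1` [set false]) w * \1_S w)) =
     (\sum_(c < n) \sum_(e < n) A a c * A b e * Pk k w c e) *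
     (\1_(lam k @^-1` [set false]) w * \1_S w).
    rewrite big_distrl; apply: eq_bigr => x _; rewrite big_distrl.
    by apply: eq_bigr => y _ /=; ring.
  ring.
have uJ1 : uniq (inl k :: J) by rewrite /= nl.
have uJ2 : uniq (inr k :: J) by rewrite /= nr.
have uJ3 : uniq (inl k :: inr k :: J) by rewrite /= nlr.
rewrite E_add; [|gtac|gtac].
rewrite E_add; [|gtac|gtac].
rewrite E_add; [|gtac|gtac].
rewrite !E_scale; [|gtac|gtac|gtac].
rewrite !E_indic'; try apply: SJ_meas.
rewrite E_sum; last by move=> x; gtac.
have Hterm : forall x, ('E_P[fun w => (\sum_(e < n) A a x * A b e * (Pk k w x e * \1_S0 w))%R]
   = \sum_(e < n) ((A a x * A b e) * F k x e)%:E * P S0)%E.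
  move=> x; rewrite E_sum; last by move=> y; gtac.
  apply: eq_bigr => y _; rewrite E_scale; last by gtac.
  rewrite IH //; last first.
    by move=> j; rewrite in_cons => /orP [/eqP -> // | /hJ /ltnW].
  by rewrite EFinM muleA.
under eq_bigr => x _ do rewrite Hterm.
have PX1 : P (X (inl k) @^-1` [set true]) = (1 - g)%:E by exact: P_true_l.
have PX2 : P (X (inr k) @^-1` [set true]) = (1 - mu)%:E by exact: P_true_u.
have PX3 : P (X (inr k) @^-1` [set false]) = mu%:E by exact: hu.
have PX4 : P (X (inl k) @^-1` [set false]) = g%:E by exact: hlam.
rewrite /S11 /S10 /S0 !P_cons // PX1 PX2 PX3 PX4.
rewrite (PfinE (SJ_meas J B)); set p := fine (P S).
under eq_bigr => x _ do under eq_bigr => y _ do rewrite -!EFinM.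
under eq_bigr => x _ do rewrite sumEFin.
rewrite sumEFin -!EFinM -!EFinD; congr (_%:E).
rewrite F_step.
under eq_bigr => x _ do rewrite -big_distrl.
rewrite -big_distrl /=.
set t := \sum_(i < n) _.
ring.
Qed.

Lemma E_Pe k a b : ('E_P[fun w => Pk k w a b] = (F k a b)%:E)%E.
Proof.
have := @claim k [::] (fun _ => setT) isT (fun j (hj : j \in [::]) => ltac:(by [])) a b.
rewrite /SJ big_nil probability_setT mule1 => <-; congr ('E_P[_])%E.
by apply: funext => w; rewrite /indic mem_set // mulr1.
Qed.
End Prob.

Lemma tmD (R : realType) n (A : 'M[R]_n) g U V l : tm A g (U + V) l = tm A g U l + tm A g V l.
Proof. by rewrite /tm mulmxDr mulmxDl scalerDr. Qed.

Lemma tmZ (R : realType) n (A : 'M[R]_n) g (a : R) U l : tm A g (a *: U) l = a *: tm A g U l.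
Proof. by rewrite /tm -scalemxAr -scalemxAl !scalemxA' mulrC. Qed.

Unset Implicit Arguments.

Theorem lemma3 (R : realType) (n m : nat)
  (A : 'M[R]_n) (C : 'M[R]_(m, n)) (Q Qh : 'M[R]_n) (Rn : 'M[R]_m)
  (Pbar P0 : 'M[R]_n) (gamma mu : R)
  (d : measure_display) (T : measurableType d) (P : probability T R)
  (lam u : nat -> T -> bool) :
  spectral_radius_lt1 A ->
  posdef Q -> posdef Rn ->
  observable A C ->
  (* Qh = Q^{1/2}, the symmetric PSD square root of Q *)
  psd Qh -> Qh *m Qh = Q -> controllable A Qh ->
  posdef Pbar -> dare A Q C Rn Pbar -> stabilizing A Q C Rn Pbar ->
  0 < gamma < 1 -> 0 < mu < 1 ->
  (forall k, measurable_fun setT (lam k)) ->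
  (forall k, measurable_fun setT (u k)) ->
  (forall k, P (lam k @^-1` [set false]) = gamma%:E) ->
  (forall k, P (u k @^-1` [set false]) = mu%:E) ->
  mutually_independent P
    (fun i : nat + nat => match i with inl k => lam k | inr k => u k end) ->
  psd P0 ->
  let Pn := lyap A Q + Pbar in
  let We := lyap (Num.sqrt gamma *: A) Pbar in
  let Se := lyap (Num.sqrt gamma *: A) Q in
  let He := lyap (Num.sqrt gamma *: A) Pn in
  let Lim := (1 - gamma) * (1 - mu) *: We + gamma *: Se
             + (1 - gamma) * mu *: He in
  forall i j : 'I_n,
    ((fun k => 'E_P[fun w => Pe A Q Pbar Pn P0 lam u k w i j]) @ \oo
      --> (Lim i j)%:E)%E.
Proof.
move=> hA _ _ _ _ _ _ _ _ _ /andP[g0 g1] _ mlam mu_ hl hu hind _ Pn We Se He Lim i j.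
clearbody Pn.
have [K [K0 hK]] := pow_bnd hA.
set c := (1 - gamma) * (1 - mu) *: Pbar + (1 - gamma) * mu *: Pn + gamma *: Q.
have -> : (fun k => 'E_P[fun w => Pe A Q Pbar Pn P0 lam u k w i j])%E =
          (fun k => (Fm A gamma c P0 k i j)%:E).
  apply: funext => k.
  exact: (E_Pe mlam mu_ hind A Q Pbar Pn P0 hl hu k i j).
apply: cvg_EFin; first by apply: nearW.
have -> : fine \o (fun k => (Fm A gamma c P0 k i j)%:E) = (fun k => Fm A gamma c P0 k i j).
  by apply: funext.
have -> : Lim i j = limn (series (fun l => tm A gamma c l i j)).
  have -> : (fun l => tm A gamma c l i j) =
     ((1 - gamma) * (1 - mu)) *: (fun l => tm A gamma Pbar l i j)
     + ((1 - gamma) * mu) *: (fun l => tm A gamma Pn l i j)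
     + gamma *: (fun l => tm A gamma Q l i j).
    by apply: funext => l; rewrite !fctE /c !tmD !tmZ !mxE.
  have cv := tm_cvg g0 g1 K0 hK.
  rewrite lim_seriesD; last by apply: is_cvg_seriesZ; apply: cv.
    2: by apply: is_cvg_seriesD; apply: is_cvg_seriesZ; apply: cv.
  rewrite lim_seriesD; [|by apply: is_cvg_seriesZ; apply: cv|by apply: is_cvg_seriesZ; apply: cv].
  rewrite !lim_seriesZ; try exact: cv.
  rewrite -!(lyapE A g0) /Lim /We /Se /He.
  by rewrite !mxE [RHS]addrAC.
exact: (Fm_cvg g0 g1 K0 hK).
Qed.
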